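(* Let $m\ge3$, $p\in[m]$, and let $\lambda_1,\lambda_2$ be $\mathbb{Z}_2$-characteristic maps over $P_m$ with $\lambda_1(p)=\lambda_2(p)=\mathbf a$. Then the D-J classes of $\lambda_1$ and $\lambda_2$ are $p$-adjacent if and only if $\lambda_2$ is obtained from $\lambda_1$ by replacing some (possibly none) of the $\mathbf b\mathbf c$-pieces of $\lambda_1$ by their inversions.
   Context: $P_m$ is the simplicial complex on $[m]$ with facets $\{i,i+1\}$ (mod $m$). Write $\mathbf a=(1,0)^T,\mathbf b=(0,1)^T,\mathbf c=(1,1)^T\in\mathbb{Z}_2^2$. A $\mathbb{Z}_2$-characteristic map over $P_m$ is a map $\lambda\colon[m]\to\{\mathbf a,\mathbf b,\mathbf c\}$ with $\lambda(i)\neq\lambda(i+1)$ for all $i$ (mod $m$), i.e. a cyclic word in $\mathbf a,\mathbf b,\mathbf c$ with no two cyclically consecutive equal letters; D-J equivalence means $\lambda'=\phi\circ\lambda$ for some $\phi\in GL(2,\mathbb{Z}_2)$ (equivalently, a permutation of the letters). The $\mathbf b\mathbf c$-pieces of $\lambda$ are the restrictions of $\lambda$ to the maximal cyclic intervals of consecutive vertices of $[m]\setminus\lambda^{-1}(\mathbf a)$; the inversion of a piece exchanges $\mathbf b$ and $\mathbf c$ on it. $p$-adjacency: for a simplicial complex $K$, the wedge $\mathrm{wed}_pK$ replaces vertex $p$ by $p_1,p_2$, its minimal non-faces being those of $K$ not containing $p$ and $(\tau\setminus\{p\})\cup\{p_1,p_2\}$ for minimal non-faces $\tau\ni p$; the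 link of $p_2$ (resp. $p_1$) is identified with $K$ via $p_1\mapsto p$ (resp. $p_2\mapsto p$). The projection of a characteristic map $\Lambda\colon V\to\mathbb{Z}_2^n$ at a vertex $v$ is $w\mapsto[\Lambda(w)]\in\mathbb{Z}_2^n/\langle\Lambda(v)\rangle$ on the link of $v$. Two D-J classes $\lambda_1,\lambda_2$ over $P_m$ are $p$-adjacent if some characteristic map $\Lambda$ over $\mathrm{wed}_pP_m$ (values in $\mathbb{Z}_2^3$, images of faces linearly independent) satisfies $\operatorname{proj}_{p_2}\Lambda\simeq\lambda_1$, $\operatorname{proj}_{p_1}\Lambda\simeq\lambda_2$. *)

(* Defs.v *)
From HB Require Import structures.
From mathcomp Require Import all_boot all_order all_algebra.
Set Implicit Arguments. Unset Strict Implicit. Unset Printing Implicit Defensive.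
Import GRing.Theory.
Local Open Scope ring_scope.

Definition va : 'rV['F_2]_2 := \row_(j < 2) (if val j == 0%N then 1 else 0).
Definition vb : 'rV['F_2]_2 := \row_(j < 2) (if val j == 1%N then 1 else 0).
Definition vc : 'rV['F_2]_2 := \row_(j < 2) 1.

Definition nxt (m : nat) (i : 'I_m) : 'I_m := ordS i.

Definition char_map_Pm (m : nat) (lam : 'I_m -> 'rV['F_2]_2) : Prop :=
  forall i : 'I_m, [/\ lam i \in [:: va; vb; vc] & lam i != lam (nxt i)].

Definition Pm_face (m : nat) (s : {set 'I_m}) : bool :=
  (#|s| <= 1)%N || [exists i : 'I_m, s == [set i; nxt i]].

Definition min_nonface (V : finType) (face : {set V} -> bool) (t : {set V}) : bool :=
  ~~ face t && [forall x in t, face (t :\ x)].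

(** The wedge wed_p K of a complex K on [m]: vertex set 'I_m + unit, where
    inl i (i <> p) is the vertex i, inl p is p1 and inr tt is p2. *)
Definition p1 (m : nat) (p : 'I_m) : 'I_m + unit := inl p.
Definition p2 (m : nat) : 'I_m + unit := inr tt.

Definition wed_mnf_of (m : nat) (p : 'I_m) (t : {set 'I_m}) : {set 'I_m + unit} :=
  if p \in t then (@inl 'I_m unit) @: t :|: [set p2 m]   (* (t \ {p}) u {p1,p2} *)
  else (@inl 'I_m unit) @: t.

Definition wed_face (m : nat) (face : {set 'I_m} -> bool) (p : 'I_m)
    (s : {set 'I_m + unit}) : bool :=
  ~~ [exists t : {set 'I_m}, min_nonface face t && (wed_mnf_of p t \subset s)].

Definition char_map (V : finType) (face : {set V} -> bool) (n : nat)
    (L : V -> 'rV['F_2]_n) : Prop :=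
  forall s : {set V}, face s ->
    row_free (\matrix_(k < #|s|) L (enum_val (A := mem s) k)).

(** "The projection of L at v, restricted to vertex w of the link
    identified with vertex idx w of P_m, is D-J equivalent to lam":
    there is a linear isomorphism phi : Z_2^n/<L v> -> Z_2^2 with
    phi [L w] = lam (idx w); equivalently a surjective linear map
    A : Z_2^n -> Z_2^2 with kernel exactly <L v> (i.e. phi composed with the
    quotient map) and L w * A = lam (idx w). *)
Definition proj_DJ_p2 (m n : nat) (L : 'I_m + unit -> 'rV['F_2]_n)
    (lam : 'I_m -> 'rV['F_2]_2) : Prop :=
  exists A : 'M['F_2]_(n, 2),
    [/\ row_full A, (kermx A == L (p2 m))%MS &
        forall i : 'I_m, L (inl i) *m A = lam i].

Definition proj_DJ_p1 (m n : nat) (p : 'I_m) (L : 'I_m + unit -> 'rV['F_2]_n)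
    (lam : 'I_m -> 'rV['F_2]_2) : Prop :=
  exists A : 'M['F_2]_(n, 2),
    [/\ row_full A, (kermx A == L (p1 p))%MS,
        L (p2 m) *m A = lam p &
        forall i : 'I_m, i != p -> L (inl i) *m A = lam i].

Definition p_adjacent (m : nat) (p : 'I_m) (lam1 lam2 : 'I_m -> 'rV['F_2]_2) : Prop :=
  exists L : 'I_m + unit -> 'rV['F_2]_3,
    [/\ char_map (wed_face (@Pm_face m) p) L,
        proj_DJ_p2 L lam1 & proj_DJ_p1 p L lam2].

Definition cyc_interval (m : nat) (S : {set 'I_m}) : Prop :=
  exists (i : 'I_m) (k : nat), S = [set iter (val t) (@nxt m) i | t : 'I_k.+1].

Definition bc_piece (m : nat) (lam : 'I_m -> 'rV['F_2]_2) (S : {set 'I_m}) : Prop :=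
  [/\ cyc_interval S, S \subset [set i | lam i != va] &
      forall T : {set 'I_m}, cyc_interval T -> S \subset T ->
        T \subset [set i | lam i != va] -> T = S].

Definition inv_bc (v : 'rV['F_2]_2) : 'rV['F_2]_2 :=
  if v == vb then vc else if v == vc then vb else v.

Definition obtained_by_inversions (m : nat) (lam1 lam2 : 'I_m -> 'rV['F_2]_2) : Prop :=
  exists Q : {set {set 'I_m}},
    (forall S, S \in Q -> bc_piece lam1 S) /\
    forall i : 'I_m,
      lam2 i = if [exists S in Q, i \in S] then inv_bc (lam1 i) else lam1 i.

(* Main.v *)
Require Import Defs.
From mathcomp Require Import all_boot all_order all_algebra zify.
From Stdlib Require Import ClassicalEpsilon.
Set Implicit Arguments. Unset Strict Implicit. Unset Printing Implicit Defensive.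
Import GRing.Theory.
Local Open Scope ring_scope.



Lemma F2P (x : 'F_2) : x = 0 \/ x = 1.
Proof. case: x => [[|[|k]] //= Hk]; [left|right]; apply/val_inj => //. Qed.

Definition row2 (x y : 'F_2) : 'rV['F_2]_2 := \row_(j < 2) (if val j == 0%N then x else y).

Lemma row2E (v : 'rV['F_2]_2) : v = row2 (v 0 0) (v 0 1).
Proof. apply/rowP => j; rewrite mxE; case: j => [[|[|]]] //= H; congr (v _ _); apply/val_inj => //. Qed.

Lemma row2_inj x y x' y' : row2 x y = row2 x' y' -> x = x' /\ y = y'.
Proof.
move/rowP => H; split; [move: (H 0) | move: (H 1)]; rewrite !mxE //.
Qed.

Lemma vaE : va = row2 1 0. Proof. by apply/rowP => j; rewrite !mxE; case: j => [[|[|]]]. Qed.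
Lemma vbE : vb = row2 0 1. Proof. by apply/rowP => j; rewrite !mxE; case: j => [[|[|]]]. Qed.
Lemma vcE : vc = row2 1 1. Proof. by apply/rowP => j; rewrite !mxE; case: j => [[|[|]]]. Qed.

Lemma row2_eqE x y x' y' : (row2 x y == row2 x' y') = (x == x') && (y == y').
Proof.
apply/eqP/andP => [/row2_inj [-> ->] //| [/eqP -> /eqP ->] //].
Qed.

Definition letter (x : 'rV['F_2]_2) := x \in [:: va; vb; vc].

Lemma letterP x : letter x -> [\/ x = va, x = vb | x = vc].
Proof. by rewrite /letter !inE => /or3P [] /eqP ->; [apply: Or31|apply: Or32|apply: Or33]. Qed.

Lemma letter_va x : letter x -> (x == va) = (x 0 1 == 0).
Proof.
by case/letterP => ->; rewrite ?vaE ?vbE ?vcE row2_eqE !mxE /=; apply/eqP.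
Qed.

Lemma letter_nva x : letter x -> x != va -> x 0 1 = 1.
Proof.
by case/letterP => ->; rewrite ?vaE ?vbE ?vcE row2_eqE !mxE //= eqxx.
Qed.

Lemma letters_diff x y : letter x -> letter y -> x != va -> y != va -> x != y ->
  x 0 0 + y 0 0 = 1.
Proof.
by do 2 case/letterP => ->; rewrite ?vaE ?vbE ?vcE !row2_eqE !mxE /= ?eqxx //= => _ _ _; apply/eqP.
Qed.

Lemma inv_bc_other x y : letter x -> letter y -> x != va -> y != va -> x != y ->
  y = inv_bc x.
Proof.
rewrite /inv_bc.
by do 2 case/letterP => ->; rewrite ?vaE ?vbE ?vcE !row2_eqE ?mxE /= ?eqxx //=.
Qed.


Definition adj m (i j : 'I_m) := (j == nxt i) || (i == nxt j).

Lemma val_nxt m (i : 'I_m) : nat_of_ord (nxt i) = (if (nat_of_ord i).+1 == m then 0 else (nat_of_ord i).+1)%N.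
Proof.
rewrite /nxt /ordS /=; have := ltn_ord i; case: eqP => [->|H] Hi; first by rewrite modnn.
by rewrite modn_small //; lia.
Qed.

Lemma adjn m (i j : 'I_m) : adj i j ->
  ((j = i + 1 :> nat \/ (i + 1 = m /\ j = 0 :> nat)) \/
   (i = j + 1 :> nat \/ (j + 1 = m /\ i = 0 :> nat)))%N.
Proof.
rewrite /adj => /orP [] /eqP /(congr1 (@nat_of_ord m)); rewrite val_nxt; case: eqP => H ->; lia.
Qed.

Lemma ord_neq m (i j : 'I_m) : i != j -> (nat_of_ord i <> nat_of_ord j)%N.
Proof. by move=> H E; move/eqP: H; apply; apply/val_inj. Qed.

Lemma tri3 m (i j k : 'I_m) : i != j -> j != k -> i != k ->
  adj i j -> adj j k -> adj i k -> m = 3%N.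
Proof.
move=> /ord_neq h1 /ord_neq h2 /ord_neq h3 /adjn a1 /adjn a2 /adjn a3.
have := ltn_ord i; have := ltn_ord j; have := ltn_ord k; lia.
Qed.

Lemma tri4 m (i j k p : 'I_m) : i != j -> j != k -> i != k ->
  i != p -> j != p -> k != p ->
  adj i j -> adj j k -> adj i k -> False.
Proof.
move=> h1 h2 h3 /ord_neq h4 /ord_neq h5 /ord_neq h6 a1 a2 a3.
have hm := tri3 h1 h2 h3 a1 a2 a3.
move/ord_neq: h1; move/ord_neq: h2; move/ord_neq: h3.
have := ltn_ord i; have := ltn_ord j; have := ltn_ord k; have := ltn_ord p; lia.
Qed.

Lemma adj_sym m (i j : 'I_m) : adj i j = adj j i.
Proof. by rewrite /adj orbC. Qed.


Lemma mnf2 m (i j : 'I_m) : i != j -> ~~ adj i j -> min_nonface (@Pm_face m) [set i; j].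
Proof.
move=> hij hadj; apply/andP; split.
  rewrite /Pm_face cards2 hij /=; apply/existsP => [[k /eqP hk]].
  have hi : i \in [set k; nxt k] by rewrite -hk !inE eqxx.
  have hj : j \in [set k; nxt k] by rewrite -hk !inE eqxx orbT.
  move: hi hj; rewrite !inE => /orP [] /eqP hi /orP [] /eqP hj;
    by move: hij hadj; rewrite /adj hi hj ?eqxx ?orbT.
apply/forallP => x; apply/implyP => hx; rewrite /Pm_face.
by have := cardsD1 x [set i; j]; rewrite hx cards2 hij add1n => [[<-]].
Qed.

Lemma mnf3 m : m = 3%N -> min_nonface (@Pm_face m) [set: 'I_m].
Proof.
move=> hm; subst m; apply/andP; split.
  rewrite /Pm_face cardsT card_ord /=; apply/existsP => [[k /eqP hk]].
  have : (#|[set k; nxt k]| <= 2)%N.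
    by rewrite cardsU1 cards1; case: (_ \notin _).
  by rewrite -hk cardsT card_ord.
apply/forallP => x; apply/implyP => _; rewrite /Pm_face; apply/orP; right.
apply/existsP; exists (nxt x); apply/eqP/setP => y; rewrite !inE.
rewrite -!val_eqE /=.
have := ltn_ord x; have := ltn_ord y; lia.
Qed.


Definition r3 (x y z : 'F_2) : 'rV['F_2]_3 :=
  \row_(k < 3) (if val k == 0%N then x else if val k == 1%N then y else z).

Definition MA : 'M['F_2]_(3,2) := \matrix_(r, c) (if val r == (val c).+1 then 1 else 0).
Definition MB : 'M['F_2]_(3,2) :=
  \matrix_(r, c) (if ((val r == 0%N) && (val c == 0%N)) || ((val r == 2%N) && (val c == 1%N)) then 1 else 0).

Lemma mulMA x y z : r3 x y z *m MA = row2 y z.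
Proof.
apply/rowP => j; rewrite !mxE !big_ord_recl big_ord0 !mxE /=.
by case: j => [[|[|]]] //= _; rewrite ?mulr0 ?mulr1 ?add0r ?addr0.
Qed.

Lemma mulMB x y z : r3 x y z *m MB = row2 x z.
Proof.
apply/rowP => j; rewrite !mxE !big_ord_recl big_ord0 !mxE /=.
by case: j => [[|[|]]] //= _; rewrite ?mulr0 ?mulr1 ?add0r ?addr0.
Qed.

Lemma full_MA : row_full MA.
Proof.
apply/row_fullP; exists (\matrix_(r < 2, c < 3) (if val c == (val r).+1 then 1 else 0)).
apply/matrixP => i j; case: i => [[|[|[|k]]] hi]; case: j => [[|[|[|l]]] hj] //;
  by rewrite !mxE !big_ord_recl big_ord0 !mxE /= ?mulr0 ?mulr1 ?add0r ?addr0.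
Qed.

Lemma full_MB : row_full MB.
Proof.
apply/row_fullP; exists (\matrix_(r < 2, c < 3)
  (if ((val c == 0%N) && (val r == 0%N)) || ((val c == 2%N) && (val r == 1%N)) then 1 else 0)).
apply/matrixP => i j; case: i => [[|[|[|k]]] hi]; case: j => [[|[|[|l]]] hj] //;
  by rewrite !mxE !big_ord_recl big_ord0 !mxE /= ?mulr0 ?mulr1 ?add0r ?addr0.
Qed.

Lemma ker_eq (M : 'M['F_2]_(3,2)) (v : 'rV['F_2]_3) :
  row_full M -> v *m M = 0 -> v != 0 -> (kermx M == v)%MS.
Proof.
move=> hf hv hnz.
have sv : (v <= kermx M)%MS by rewrite sub_kermx hv.
rewrite sv andbT -(mxrank_leqif_sup sv) mxrank_ker rank_rV hnz.
by move: hf; rewrite /row_full => /eqP ->.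
Qed.

Lemma r3_neq0 x y z : (x != 0) || (y != 0) || (z != 0) -> r3 x y z != 0.
Proof.
move=> H; apply/eqP => /rowP E.
move: (E 0) (E 1) (E 2) H; rewrite !mxE /= => -> -> ->.
by rewrite eqxx.
Qed.


Lemma rowfree_of_sum (V : finType) (n : nat) (s : {set V}) (L : V -> 'rV['F_2]_n) :
  (forall T : {set V}, T \subset s -> \sum_(x in T) L x = 0 -> T = set0) ->
  row_free (\matrix_(k < #|s|) L (enum_val (A := mem s) k)).
Proof.
move=> H; rewrite -kermx_eq0; apply/rowV0P => c; rewrite sub_kermx => /eqP hc.
rewrite mulmx_sum_row in hc.
set K := [set k | c 0 k != 0].
set T := (fun k => enum_val (A := mem s) k) @: K.
have hT : T \subset s by apply/subsetP => x /imsetP [k _ ->]; apply: enum_valP.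
have hsum : \sum_(x in T) L x = 0.
  rewrite big_imset /=; last by move=> a b _ _; apply: enum_val_inj.
  rewrite -[RHS]hc [RHS](bigID (fun k => c 0 k != 0)) /= [X in _ = _ + X]big1 ?addr0.
    apply: eq_big => k; first by rewrite inE.
    move=> hk; rewrite inE in hk; rewrite rowK; have [E|E] := F2P (c 0 k); first by rewrite E eqxx in hk.
    by rewrite E scale1r.
  by move=> k; rewrite negbK => /eqP ->; rewrite scale0r.
have T0 := H T hT hsum.
apply/rowP => k; rewrite mxE; apply/eqP; apply/negPn/negP => hk.
have : enum_val (A := mem s) k \in T by apply/imsetP; exists k; rewrite // inE.
by rewrite T0 inE.
Qed.


Lemma decomp m (p : 'I_m) (V : nmodType) (F : 'I_m + unit -> V) (T : {set 'I_m + unit}) :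
  \sum_(x in T) F x = (if inr tt \in T then F (inr tt) else 0) +
     (if inl p \in T then F (inl p) else 0) +
     \sum_(i in [set i | (inl i \in T) && (i != p)]) F (inl i).
Proof.
rewrite (big_sumType _ (fun x => x \in T)) /=.
have -> : \sum_(i : unit | inr i \in T) F (inr i) = if inr tt \in T then F (inr tt) else 0.
  rewrite big_mkcond (bigD1 tt) //= big_pred0 ?addr0 //; by case.
have -> : \sum_(i | inl i \in T) F (inl i) = (if inl p \in T then F (inl p) else 0) +
     \sum_(i in [set i | (inl i \in T) && (i != p)]) F (inl i).
  rewrite (bigID (pred1 p)) /=; congr (_ + _); last first.
    by apply: eq_bigl => i; rewrite inE.
  case hp: (inl p \in T).
    rewrite (big_pred1 p) // => i /=; case: eqP => [->|]; by rewrite ?hp ?andbT ?andbF.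
  rewrite big_pred0 // => i; case: eqP => [->|]; by rewrite ?hp ?andbT ?andbF.
by rewrite [LHS]addrC addrA.
Qed.


Definition Lw m (p : 'I_m) (lam1 lam2 : 'I_m -> 'rV['F_2]_2) (x : 'I_m + unit) : 'rV['F_2]_3 :=
  match x with
  | inl i => if i == p then r3 0 1 0 else r3 (lam2 i 0 0) (lam1 i 0 0) (lam1 i 0 1)
  | inr _ => r3 1 0 0
  end.

Lemma face_contra m (p : 'I_m) (T : {set 'I_m + unit}) (t : {set 'I_m}) :
  min_nonface (@Pm_face m) t -> wed_mnf_of p t \subset T -> ~~ wed_face (@Pm_face m) p T.
Proof. by move=> h1 h2; rewrite /wed_face negbK; apply/existsP; exists t; rewrite h1. Qed.

Lemma sub_pi m (p i : 'I_m) (T : {set 'I_m + unit}) :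
  inl p \in T -> inl i \in T -> inr tt \in T -> wed_mnf_of p [set p; i] \subset T.
Proof.
move=> hp hi ht; rewrite /wed_mnf_of !inE eqxx /=.
apply/subsetP => x /setUP [/imsetP [y] | ]; last by rewrite inE => /eqP ->.
by rewrite !inE => /orP [] /eqP -> ->.
Qed.

Lemma sub_ij m (p i j : 'I_m) (T : {set 'I_m + unit}) :
  i != p -> j != p -> inl i \in T -> inl j \in T -> wed_mnf_of p [set i; j] \subset T.
Proof.
move=> hip hjp hi hj.
have hp : (p \in [set i; j]) = false by rewrite !inE !(eq_sym p) (negbTE hip) (negbTE hjp).
rewrite /wed_mnf_of hp.
by apply/subsetP => x /imsetP [y]; rewrite !inE => /orP [] /eqP -> ->.
Qed.

Lemma sub_all m (p : 'I_m) (T : {set 'I_m + unit}) :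
  (forall x, inl x \in T) -> inr tt \in T -> wed_mnf_of p [set: 'I_m] \subset T.
Proof.
move=> hx ht; rewrite /wed_mnf_of inE.
apply/subsetP => x /setUP [/imsetP [y _ ->] //| ]; by rewrite inE => /eqP ->.
Qed.

Lemma adj_neq m (lam : 'I_m -> 'rV['F_2]_2) (i j : 'I_m) :
  char_map_Pm lam -> adj i j -> lam i != lam j.
Proof.
move=> h /orP [] /eqP ->; first by case: (h i).
by rewrite eq_sym; case: (h j).
Qed.

Lemma va_nadj m (lam : 'I_m -> 'rV['F_2]_2) (p i : 'I_m) :
  char_map_Pm lam -> lam p = va -> lam i = va -> ~~ adj p i.
Proof.
move=> h hp hi; apply/negP => /(adj_neq h); by rewrite hp hi eqxx.
Qed.

Lemma F2_if1 (b : bool) (x : 'F_2) : (if b then 1 else 0) + x = 0 -> x = 1 -> b.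
Proof. by move=> H Hx; move: H; rewrite Hx; case: b => //= /eqP. Qed.

Lemma F2_sum0 (x y : 'F_2) : x + y = 0 -> x = y.
Proof. by case: (F2P x) => ->; case: (F2P y) => -> // /eqP. Qed.
Lemma three_cover m (x i j p : 'I_m) : m = 3%N -> i != j -> i != p -> j != p ->
  [|| x == p, x == i | x == j].
Proof.
move=> hm; subst m.
case: x => x hx; case: i => i hi; case: j => j hj; case: p => p hp.
rewrite /eq_op /=.
lia.
Qed.

Lemma card_cases (T : finType) (J : {set T}) :
  [\/ J = set0, (exists i, J = [set i]), (exists i j, i != j /\ J = [set i; j]) | (2 < #|J|)%N].
Proof.
have : (#|J| = 0 \/ #|J| = 1 \/ #|J| = 2 \/ 2 < #|J|)%N by lia.
case=> [/cards0_eq|[/eqP/cards1P|[/eqP/cards2P|]]]; by [apply: Or41|apply: Or42|apply: Or43|apply: Or44].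
Qed.

Lemma face_sum0 m (p : 'I_m) (lam1 lam2 : 'I_m -> 'rV['F_2]_2)
  (h1 : char_map_Pm lam1) (h2 : char_map_Pm lam2) (h1p : lam1 p = va)
  (hA : forall i, (lam1 i == va) = (lam2 i == va)) (T : {set 'I_m + unit}) :
  wed_face (@Pm_face m) p T -> \sum_(x in T) Lw p lam1 lam2 x = 0 -> T = set0.
Proof.
move=> hf hs.
set J := [set i | (inl i \in T) && (i != p)].
have E (k : 'I_3) : (if inr tt \in T then (if val k == 0%N then 1 else 0) else 0) +
   (if inl p \in T then (if val k == 1%N then 1 else 0) else 0) +
   \sum_(i in J) (if val k == 0%N then lam2 i 0 0 else if val k == 1%N then lam1 i 0 0 else lam1 i 0 1) = 0.
  move/rowP: hs => /(_ k); rewrite summxE mxE (decomp p) /= eqxx !mxE.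
  have -> // : \sum_(i in J) Lw p lam1 lam2 (inl i) 0 k =
     \sum_(i in J) (if val k == 0%N then lam2 i 0 0 else if val k == 1%N then lam1 i 0 0 else lam1 i 0 1).
    apply: eq_bigr => i; rewrite inE => /andP [_ /negbTE] /= ->; by rewrite mxE.
  case: k => [[|[|[|]]] ?] //=.
have E0 := E ord0; have E1 := E (@Ordinal 3 1 isT); have E2 := E (@Ordinal 3 2 isT).
move: E0 E1 E2 => /= E0 E1 E2.
have letter1 i : letter (lam1 i) by case: (h1 i).
have letter2 i : letter (lam2 i) by case: (h2 i).
have inJ i : i \in J -> (inl i \in T) /\ (i != p) by rewrite inE => /andP.
case: (card_cases J) => [J0|[i Ji]|[i [j [hij Jij]]]|J3].
-
  move: E0 E1; rewrite J0 !big_set0 !addr0.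
  case hb2: (inr tt \in T); case hp: (inl p \in T) => /eqP // _ /eqP // _.
  apply/setP => -[i|[]]; rewrite inE //.
  case: (i =P p) => [-> //|/eqP ne]; apply/negP => hi.
  have : i \in J by rewrite inE hi ne.
  by rewrite J0 inE.
-
  have [hiT hip] : (inl i \in T) /\ (i != p) by apply: inJ; rewrite Ji inE.
  move: E0 E1 E2; rewrite Ji !big_set1 !if_same ?add0r ?addr0 => E0 E1 E2.
  have l1 : lam1 i = va by apply/eqP; rewrite letter_va //; apply/eqP.
  have l2 : lam2 i = va by apply/eqP; rewrite -hA l1.
  have hb2 : inr tt \in T.
    apply: (F2_if1 (x := lam2 i 0 0)); last by rewrite l2 vaE mxE.
    by [].
  have hb1 : inl p \in T.
    apply: (F2_if1 (x := lam1 i 0 0)); last by rewrite l1 vaE mxE.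
    by [].
  exfalso; move: hf; apply/negP; apply: (face_contra (t := [set p; i])).
    by apply: mnf2; [rewrite eq_sym | apply: (va_nadj h1)].
  exact: sub_pi.
-
  have [hiT hip] : (inl i \in T) /\ (i != p) by apply: inJ; rewrite Jij !inE eqxx.
  have [hjT hjp] : (inl j \in T) /\ (j != p) by apply: inJ; rewrite Jij !inE eqxx orbT.
  have [hadj|hnadj] := boolP (adj i j); last first.
    exfalso; move: hf; apply/negP; apply: (face_contra (t := [set i; j])); first exact: mnf2.
    exact: sub_ij.
  have d1 := adj_neq h1 hadj; have d2 := adj_neq h2 hadj.
  have hni : i \notin [set j] by rewrite inE.
  move: E0 E1 E2; rewrite Jij !big_setU1 // !big_set1 => E0 E1 E2.
  move: E2; rewrite !if_same !add0r => /F2_sum0 E2.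
  have n1i : lam1 i != va.
    apply/negP => hi.
    have hj : lam1 j == va by rewrite (letter_va (letter1 j)) -E2 -(letter_va (letter1 i)).
    by move: d1; rewrite (eqP hi) (eqP hj) eqxx.
  have n1j : lam1 j != va by rewrite (letter_va (letter1 j)) -E2 -(letter_va (letter1 i)).
  have n2i : lam2 i != va by rewrite -hA.
  have n2j : lam2 j != va by rewrite -hA.
  move: E0 E1; rewrite !if_same addr0 add0r => E0 E1.
  have hb1 : inl p \in T by apply: (F2_if1 E1); apply: letters_diff.
  have hb2 : inr tt \in T by apply: (F2_if1 E0); apply: letters_diff.
  exfalso; move: hf; apply/negP.
  have [hpi|hpi] := boolP (adj p i); last first.
    apply: (face_contra (t := [set p; i])); last exact: sub_pi.
    by apply: mnf2; rewrite // eq_sym.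
  have [hpj|hpj] := boolP (adj p j); last first.
    apply: (face_contra (t := [set p; j])); last exact: sub_pi.
    by apply: mnf2; rewrite // eq_sym.
  have hm3 := tri3 hij hjp hip hadj (eq_ind _ _ hpj _ (adj_sym _ _)) (eq_ind _ _ hpi _ (adj_sym _ _)).
  apply: (face_contra (t := [set: 'I_m])); first exact: mnf3.
  apply: sub_all => // x.
  by case/or3P: (three_cover x hm3 hij hip hjp) => /eqP ->.
-
  case/card_gt2P: J3 => [x [y [z [[hx hy hz] [hxy hyz hzx]]]]].
  have [_ hxp] := inJ x hx; have [_ hyp] := inJ y hy; have [_ hzp] := inJ z hz.
  have [hxT _] := inJ x hx; have [hyT _] := inJ y hy; have [hzT _] := inJ z hz.
  exfalso; move: hf; apply/negP.
  have [a1|a1] := boolP (adj x y); last first.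
    by apply: (face_contra (t := [set x; y])); [exact: mnf2 | exact: sub_ij].
  have [a2|a2] := boolP (adj y z); last first.
    by apply: (face_contra (t := [set y; z])); [exact: mnf2 | exact: sub_ij].
  have [a3|a3] := boolP (adj x z); last first.
    by apply: (face_contra (t := [set x; z])); [rewrite eq_sym in hzx; exact: mnf2 | exact: sub_ij].
  by rewrite eq_sym in hzx; case: (tri4 hxy hyz hzx hxp hyp hzp a1 a2 a3).
Qed.


Lemma wed_face_sub m (p : 'I_m) (s T : {set 'I_m + unit}) :
  wed_face (@Pm_face m) p s -> T \subset s -> wed_face (@Pm_face m) p T.
Proof.
move=> hs hT; move: hs; rewrite /wed_face; apply: contra => /existsP [t /andP [h1 h2]].
by apply/existsP; exists t; rewrite h1 (subset_trans h2 hT).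
Qed.

Lemma inv_bc_va x : (inv_bc x == va) = (x == va).
Proof.
rewrite /inv_bc; case: (x =P vb) => [->|_]; first by rewrite vbE vcE vaE !row2_eqE.
by case: (x =P vc) => [->|_]; first by rewrite vbE vcE vaE !row2_eqE.
Qed.

Lemma row2_00 : row2 0 0 = 0.
Proof. by apply/rowP => j; rewrite !mxE; case: ifP. Qed.

Lemma same_va_coord x y : letter x -> letter y -> (x == va) = (y == va) -> x 0 1 = y 0 1.
Proof.
move=> hx hy; rewrite (letter_va hx) (letter_va hy).
by case: (F2P (x 0 1)) => ->; case: (F2P (y 0 1)) => -> // /eqP.
Qed.

Lemma dir2 m (p : 'I_m) (lam1 lam2 : 'I_m -> 'rV['F_2]_2)
    (h1 : char_map_Pm lam1) (h2 : char_map_Pm lam2)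
    (h1p : lam1 p = va) (h2p : lam2 p = va) :
  obtained_by_inversions lam1 lam2 -> p_adjacent p lam1 lam2.
Proof.
case=> Q [_ hQ].
have hA i : (lam1 i == va) = (lam2 i == va).
  by rewrite hQ; case: ifP => _ //; rewrite inv_bc_va.
have letter1 i : letter (lam1 i) by case: (h1 i).
have letter2 i : letter (lam2 i) by case: (h2 i).
exists (Lw p lam1 lam2); split.
- move=> s hs; apply: rowfree_of_sum => T hT hsum.
  exact: (face_sum0 h1 h2 h1p hA (wed_face_sub hs hT) hsum).
- exists MA; split; first exact: full_MA.
    apply: ker_eq; first exact: full_MA.
      by rewrite /= mulMA row2_00.
    by apply: r3_neq0.
  move=> i /=; case: (i =P p) => [->|_]; rewrite mulMA; first by rewrite h1p vaE.
  by rewrite -row2E.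
- exists MB; split; first exact: full_MB.
  + rewrite /= eqxx; apply: ker_eq; first exact: full_MB.
      by rewrite mulMB row2_00.
    by apply: r3_neq0.
  + by rewrite /= mulMB h2p vaE.
  + move=> i /= /negbTE ->; rewrite mulMB (same_va_coord (letter1 i) (letter2 i) (hA i)).
    by rewrite -row2E.
Qed.


Lemma letter_neq0 x : letter x -> x != 0.
Proof.
rewrite -row2_00; by case/letterP => ->; rewrite ?vaE ?vbE ?vcE row2_eqE.
Qed.

Lemma key (M N : 'M['F_2]_(3,2)) (u x y : 'rV['F_2]_3) :
  (u - x) *m M = 0 -> (kermx M == y)%MS -> x *m N = 0 -> y *m N = va ->
  letter (u *m N) -> u *m N = va.
Proof.
move=> h0 /andP [hk _] hx hy hl.
have : (u - x <= y)%MS by apply: submx_trans hk; rewrite sub_kermx h0.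
case/submxP => D hD.
have hu : u *m N = D *m va.
  by rewrite -hy mulmxA -hD mulmxBl hx subr0.
move: hl; rewrite hu (mx11_scalar D) mul_scalar_mx.
case: (F2P (D 0 0)) => ->; last by rewrite scale1r.
by rewrite scale0r => /letter_neq0; rewrite eqxx.
Qed.

Lemma adj_va m (p : 'I_m) (lam1 lam2 : 'I_m -> 'rV['F_2]_2)
    (h1 : char_map_Pm lam1) (h2 : char_map_Pm lam2)
    (h1p : lam1 p = va) (h2p : lam2 p = va) :
  p_adjacent p lam1 lam2 -> forall i, (lam1 i == va) = (lam2 i == va).
Proof.
case=> L [_ [A [fA kA hA1]] [B [fB kB hB2 hB]]] i.
have letter1 j : letter (lam1 j) by case: (h1 j).
have letter2 j : letter (lam2 j) by case: (h2 j).
case: (i =P p) => [->|/eqP hip]; first by rewrite h1p h2p.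
have wA : L (inl p) *m A = va by rewrite hA1 h1p.
have vB : L (inr tt) *m B = va by rewrite hB2 h2p.
have vA : L (inr tt) *m A = 0.
  by apply/eqP; rewrite -sub_kermx; case/andP: kA => _.
have wB : L (inl p) *m B = 0.
  by apply/eqP; rewrite -sub_kermx; case/andP: kB => _.
apply/eqP/eqP => hi.
- rewrite -(hB i hip); apply: (key (M := A) (x := L (inl p)) (y := L (inr tt))) => //.
    by rewrite mulmxBl hA1 wA hi subrr.
  by rewrite hB.
- rewrite -(hA1 i); apply: (key (M := B) (x := L (inr tt)) (y := L (inl p))) => //.
    by rewrite mulmxBl hB // vB hi subrr.
  by rewrite hA1.
Qed.


Definition pb (P : Prop) : bool := if excluded_middle_informative P then true else false.
Lemma pbP (P : Prop) : reflect P (pb P).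
Proof. by rewrite /pb; case: excluded_middle_informative => h; constructor. Qed.

Lemma inv_bc_inv x : inv_bc (inv_bc x) = x.
Proof.
rewrite /inv_bc; case: (x =P vb) => [->|nb].
  by rewrite vbE vcE !row2_eqE.
case: (x =P vc) => [->|nc]; first by rewrite vbE vcE !row2_eqE.
by move/eqP/negbTE: nb => ->; move/eqP/negbTE: nc => ->.
Qed.

Lemma step m (lam1 lam2 : 'I_m -> 'rV['F_2]_2)
    (h1 : char_map_Pm lam1) (h2 : char_map_Pm lam2)
    (hA : forall i, (lam1 i == va) = (lam2 i == va)) (j : 'I_m) :
  lam1 j != va -> lam1 (nxt j) != va ->
  (lam2 (nxt j) == lam1 (nxt j)) = (lam2 j == lam1 j).
Proof.
move=> n1 n2.
have [l1 d1] := h1 j; have [l2 d2] := h2 j.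
have [l1' _] := h1 (nxt j); have [l2' _] := h2 (nxt j).
rewrite (inv_bc_other l1 l1' n1 n2 d1) (inv_bc_other l2 l2' _ _ d2) -?hA //.
by apply/eqP/eqP => [h|->] //; rewrite -[lam2 j]inv_bc_inv h inv_bc_inv.
Qed.

Lemma prop_interval m (lam1 lam2 : 'I_m -> 'rV['F_2]_2)
    (h1 : char_map_Pm lam1) (h2 : char_map_Pm lam2)
    (hA : forall i, (lam1 i == va) = (lam2 i == va)) (S : {set 'I_m}) :
  cyc_interval S -> S \subset [set i | lam1 i != va] ->
  exists i0, forall j, j \in S -> (lam2 j == lam1 j) = (lam2 i0 == lam1 i0).
Proof.
case=> i0 [k ->] hsub; exists i0.
have mem t : (t <= k)%N -> iter t (@nxt m) i0 \in [set iter (val t) (@nxt m) i0 | t : 'I_k.+1].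
  by move=> ht; apply/imsetP; exists (Ordinal (ht : (t < k.+1)%N)).
have nA t : (t <= k)%N -> lam1 (iter t (@nxt m) i0) != va.
  by move=> ht; move/subsetP: hsub => /(_ _ (mem t ht)); rewrite inE.
have H t : (t <= k)%N -> (lam2 (iter t (@nxt m) i0) == lam1 (iter t (@nxt m) i0)) = (lam2 i0 == lam1 i0).
  elim: t => [//|t IH] ht.
  rewrite iterS step //; first exact: IH (ltnW ht).
    exact: nA (ltnW ht).
  by rewrite -iterS; apply: nA.
move=> j /imsetP [t _ ->]; apply: H; rewrite -ltnS; exact: ltn_ord.
Qed.

Lemma single_interval m (i : 'I_m) : cyc_interval [set i].
Proof.
exists i, 0%N; apply/setP => x; rewrite inE; apply/eqP/imsetP => [->|[t _ ->]].
  by exists ord0.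
by rewrite (ord1 t).
Qed.

Lemma exists_piece m (lam1 : 'I_m -> 'rV['F_2]_2) (i : 'I_m) :
  lam1 i != va -> exists S, bc_piece lam1 S /\ i \in S.
Proof.
move=> hi.
set P := fun n => pb (exists S : {set 'I_m}, [/\ cyc_interval S, i \in S,
   S \subset [set j | lam1 j != va] & #|S| = n]).
have exP : exists n, P n.
  exists 1%N; apply/pbP; exists [set i]; split; rewrite ?cards1 ?inE ?eqxx //.
    exact: single_interval.
  by apply/subsetP => x; rewrite !inE => /eqP ->.
have ubP : forall n, P n -> (n <= m)%N.
  move=> n /pbP [S [_ _ _ <-]]; have := max_card (mem S); by rewrite card_ord.
case: (ex_maxnP exP ubP) => n /pbP [S [hc hiS hsub hn]] hmax.
exists S; split => //; split => // T hT hST hTsub.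
have : P #|T| by apply/pbP; exists T; split => //; move/subsetP: hST; apply.
move/hmax; rewrite -hn => hle.
by apply/eqP; rewrite eq_sym eqEcard hST hle.
Qed.


Lemma dir1 m (p : 'I_m) (lam1 lam2 : 'I_m -> 'rV['F_2]_2)
    (h1 : char_map_Pm lam1) (h2 : char_map_Pm lam2)
    (h1p : lam1 p = va) (h2p : lam2 p = va) :
  p_adjacent p lam1 lam2 -> obtained_by_inversions lam1 lam2.
Proof.
move=> hadj; have hA := adj_va h1 h2 h1p h2p hadj.
have letter1 j : letter (lam1 j) by case: (h1 j).
have letter2 j : letter (lam2 j) by case: (h2 j).
exists [set S : {set 'I_m} | pb (bc_piece lam1 S) && [forall j in S, lam2 j != lam1 j]].
split.
  by move=> S; rewrite inE => /andP [/pbP h _].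
move=> i; case: ifP.
  case/existsP => S /andP []; rewrite inE => /andP [/pbP [_ hsub _] /forall_inP hall] hiS.
  have n1 : lam1 i != va by move/subsetP: hsub => /(_ _ hiS); rewrite inE.
  have n2 : lam2 i != va by rewrite -hA.
  apply: inv_bc_other => //; rewrite eq_sym; exact: hall.
move=> hno.
case: (boolP (lam1 i == va)) => hi.
  have hi2 : lam2 i == va by rewrite -hA.
  by rewrite (eqP hi) (eqP hi2).
have [S [hS hiS]] := exists_piece hi.
have [hc hsub _] := hS.
have [i0 hprop] := prop_interval h1 h2 hA hc hsub.
have : ~~ [forall j in S, lam2 j != lam1 j].
  apply/negP => hall; move/negbT/negP: hno; apply; apply/existsP; exists S.
  by rewrite hiS inE hall !andbT; apply/pbP; exact: hS.
case/forall_inPn => j hjS; rewrite negbK => hj.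
by apply/eqP; rewrite (hprop i hiS) -(hprop j hjS).
Qed.

Theorem mainTheorem3 (m : nat) (hm : (3 <= m)%N) (p : 'I_m)
    (lam1 lam2 : 'I_m -> 'rV['F_2]_2)
    (h1 : char_map_Pm lam1) (h2 : char_map_Pm lam2)
    (h1p : lam1 p = va) (h2p : lam2 p = va) :
  p_adjacent p lam1 lam2 <-> obtained_by_inversions lam1 lam2.
Proof.
split; [exact: dir1 | exact: dir2].
Qed.
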